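(* Let $G$ and $H$ be two nontrivial connected graphs with orders $m$ and $n$ respectively. Then $$C_{cc}(G\Box H)=\max\{n\cdot C_{cc}(G),\ m\cdot C_{cc}(H)\}.$$
   Context: All graphs are finite, simple and undirected. For a graph $G$ and $S\subseteq V(G)$, the cycle interval $\langle S\rangle$ consists of the vertices of $S$ together with every vertex $w\in V(G)\setminus S$ such that $G[S\cup\{w\}]$ contains a cycle through $w$; $S$ is cycle convex if $\langle S\rangle=S$. The cycle convexity number $C_{cc}(G)$ is the maximum cardinality of a proper (i.e. $\neq V(G)$) cycle convex subset of $V(G)$. The Cartesian product $G\Box H$ has vertex set $V(G)\times V(H)$, with $(g_1,h_1)\sim(g_2,h_2)$ iff ($g_1\sim g_2$ and $h_1=h_2$) or ($g_1=g_2$ and $h_1\sim h_2$). A graph is nontrivial if it has at least two vertices. *)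

(* Defs.v *)
From mathcomp Require Import all_boot.
Set Implicit Arguments. Unset Strict Implicit. Unset Printing Implicit Defensive.

Section CycleConvexity.
Variable T : finType.
Variable e : rel T.

Definition simple_graph : Prop := symmetric e /\ irreflexive e.

Definition connected_graph : Prop := forall x y : T, connect e x y.

(* Cycles are duplicate-free hence have at most #|T| vertices, so
   bounding the length by #|T| loses nothing (and makes the test boolean). *)
Definition is_cycle (c : seq T) : bool := [&& 2 < size c, uniq c & cycle e c].

Definition cycle_through_in (A : {set T}) (w : T) : bool :=
  [exists n : 'I_(#|T|.+1), exists t : n.-tuple T,
     [&& is_cycle t, w \in tval t & all (fun v => v \in A) t]].

Definition cycle_interval (S : {set T}) : {set T} :=
  S :|: [set w | (w \notin S) && cycle_through_in (w |: S) w].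

Definition cycle_convex (S : {set T}) : bool := cycle_interval S == S.

Definition Ccc : nat :=
  \max_(S : {set T} | (S != [set: T]) && cycle_convex S) #|S|.

End CycleConvexity.

Definition box_rel (T1 T2 : finType) (e1 : rel T1) (e2 : rel T2) : rel (T1 * T2) :=
  fun u v => (e1 u.1 v.1 && (u.2 == v.2)) || ((u.1 == v.1) && e2 u.2 v.2).

(* Main.v *)
Require Import Defs.
From mathcomp Require Import all_boot.
Set Implicit Arguments. Unset Strict Implicit. Unset Printing Implicit Defensive.

Section Gen.
Variable T : finType.
Variable e : rel T.

Lemma ctiP (A : {set T}) w :
  reflect (exists c : seq T, [&& is_cycle e c, w \in c & all (fun v => v \in A) c])
          (cycle_through_in e A w).
Proof.
apply: (iffP existsP).
- case=> n /existsP [t /and3P [Hc Hw Ha]]. by exists (tval t); rewrite Hc Hw Ha.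
- case=> c /and3P [Hc Hw Ha].
  have Hs : size c < #|T|.+1.
    rewrite ltnS. case/and3P: Hc => _ Hu _. by rewrite -(card_uniqP Hu) max_card.
  exists (Ordinal Hs). apply/existsP. exists (in_tuple c). by rewrite /= Hc Hw Ha.
Qed.

Lemma cti_sub (A B : {set T}) w : A \subset B -> cycle_through_in e A w -> cycle_through_in e B w.
Proof.
move=> /subsetP AB /ctiP [c /and3P [H1 H2 H3]]; apply/ctiP; exists c.
rewrite H1 H2 /=; apply: sub_all H3 => v; exact: AB.
Qed.

Lemma convexP (S : {set T}) :
  reflect (forall w, w \notin S -> ~~ cycle_through_in e (w |: S) w) (cycle_convex e S).
Proof.
rewrite /cycle_convex /cycle_interval.
apply: (iffP eqP).
- move=> H w wS; apply/negP => Hc.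
  have : w \in S :|: [set w | (w \notin S) && cycle_through_in e (w |: S) w].
    by rewrite in_setU in_set wS Hc orbT.
  by rewrite H (negbTE wS).
- move=> H; apply/setP => w; rewrite in_setU in_set.
  case: (boolP (w \in S)) => //= wS. by rewrite (negbTE (H w wS)).
Qed.

Lemma Ccc_ge (S : {set T}) : S != setT -> cycle_convex e S -> #|S| <= Ccc e.
Proof.
move=> H1 H2; rewrite /Ccc.
apply: (@leq_bigmax_cond _ (fun S : {set T} => (S != setT) && cycle_convex e S) (fun S => #|S|) S).
by rewrite H1.
Qed.

Lemma Ccc_le n : (forall S : {set T}, S != setT -> cycle_convex e S -> #|S| <= n) -> Ccc e <= n.
Proof. move=> H; apply/bigmax_leqP => S /andP [H1 H2]; exact: H. Qed.

Lemma Ccc_attained : Ccc e = 0 \/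
  exists2 S : {set T}, (S != setT) && cycle_convex e S & #|S| = Ccc e.
Proof.
case: (boolP [exists S : {set T}, (S != setT) && cycle_convex e S]) => [/existsP [S0 HS0]|Hn].
- right.
  have [|S HS E] := @eq_bigmax_cond _ (fun S : {set T} => (S != setT) && cycle_convex e S) (fun S => #|S|).
    by apply/card_gt0P; exists S0.
  by exists S => //; rewrite /Ccc E.
- left; rewrite /Ccc big_pred0 // => S; apply/negbTE; move: Hn; rewrite negb_exists => /forallP; apply.
Qed.

End Gen.

Lemma cti_map (T T' : finType) (e : rel T) (e' : rel T') (f : T' -> T) (A : {set T'}) w :
  injective f -> (forall x y, e' x y -> e (f x) (f y)) ->
  cycle_through_in e' A w -> cycle_through_in e (f @: A) (f w).
Proof.
move=> fi fh /ctiP [c /and3P [/and3P [Hs Hu Hc] Hw Ha]]; apply/ctiP; exists (map f c).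
rewrite /is_cycle size_map Hs (map_inj_uniq fi) Hu map_f //=.
rewrite all_map; apply/andP; split.
  by rewrite cycle_map; apply: sub_cycle Hc => x y; exact: fh.
by apply: sub_all Ha => v /= Hv; apply: imset_f.
Qed.

Lemma convex_preim (T T' : finType) (e : rel T) (e' : rel T') (f : T' -> T) (W : {set T}) :
  injective f -> (forall x y, e' x y -> e (f x) (f y)) ->
  cycle_convex e W -> cycle_convex e' (f @^-1: W).
Proof.
move=> fi fh /convexP HW; apply/convexP => w; rewrite inE => wS; apply/negP => Hc.
have := cti_map fi fh Hc => /(cti_sub (B := f w |: W)) H.
move: (HW _ wS); rewrite H //.
apply/subsetP => y /imsetP [x Hx ->]; move: Hx; rewrite !inE => /orP [/eqP ->|->].
  by rewrite eqxx. by rewrite orbT.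
Qed.

Section Proj.
Variables (T T1 : finType) (e : rel T) (e1 : rel T1) (p : T -> T1) (S : {set T1}).
Hypothesis H1 : forall u v, e u v -> e1 (p u) (p v) || (p u == p v).
Hypothesis H3 : forall w u v, p w \notin S -> e w u -> e v w -> p u \in S -> p v \in S -> p u = p v -> u = v.

Let r := [rel x y | e1 x y && (y \in S)].

Lemma walk_proj x s : p x \in S -> all (fun v => p v \in S) s -> path e x s ->
  connect r (p x) (p (last x s)).
Proof.
elim: s x => [|y s IH] x /= px; first by [].
move=> /andP [py ps] /andP [exy pth].
apply: connect_trans (IH y py ps pth).
case/orP: (H1 exy) => [E|/eqP ->]; last exact: connect0.
by apply: connect1; rewrite /= E py.
Qed.

Lemma rpath_all x s : path r x s -> all (fun v => v \in S) s.
Proof. by elim: s x => [|y s IH] x //= /andP [/andP [_ ->] /IH]. Qed.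

Lemma convex_proj : cycle_convex e1 S -> cycle_convex e (p @^-1: S).
Proof.
move=> /convexP HS; apply/convexP => w; rewrite inE => wS; apply/negP => /ctiP [c /and3P [Hcyc wc Hall]].
case: (rot_to wc) => i s Hrot.
have : is_cycle e (w :: s) by rewrite -Hrot /is_cycle size_rot rot_uniq rot_cycle.
have : all (fun v => v \in w |: p @^-1: S) (w :: s).
  by rewrite -Hrot; apply/allP => v; rewrite mem_rot => /(allP Hall).
clear Hrot Hall Hcyc wc c i.
case: s => [|a s] // Hall /and3P [Hsz Hu Hcyc].
have sn : s != [::] by case: s Hsz {Hall Hu Hcyc}.
have : path e w (rcons (a :: s) w) by exact: Hcyc.
rewrite rcons_path => /andP [pwas ebw].
case/andP: pwas => ewa pas.
change (is_true (path e a s)) in pas. change (is_true (e (last a s) w)) in ebw.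
have bin : last a s \in s by case: s sn {Hall Hsz Hcyc ebw pas Hu} => // z s _ /=; exact: mem_last.
set b := last a s in ebw bin.
move: Hu; rewrite /= => /and3P [wn an _].
have allS : all (fun v => p v \in S) (a :: s).
  apply/allP => v vin; move: (allP Hall v); rewrite inE vin orbT => /(_ isT).
  rewrite !inE => /orP [/eqP E|//]; by rewrite -E vin in wn.
have pa : p a \in S by case/andP: allS.
have pb : p b \in S by apply: (allP allS); rewrite inE bin orbT.
have ab : p a != p b.
  apply/eqP => E; have := H3 wS ewa ebw pa pb E => Eab; by rewrite Eab bin in an.
have := walk_proj pa (proj2 (andP allS)) pas; rewrite -/b.
case/connectP => q pq Eq.
move: Eq; case: (shortenP pq) => q' pq' uq' _ Eq.
have q'n : q' != [::] by apply/eqP => E; move: Eq; rewrite E /= => Eq; rewrite Eq eqxx in ab.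
have e1wa : e1 (p w) (p a).
  case/orP: (H1 ewa) => // /eqP E; by rewrite E pa in wS.
have e1bw : e1 (p b) (p w).
  case/orP: (H1 ebw) => // /eqP E; by rewrite -E pb in wS.
have qS := rpath_all pq'.
move: (HS _ wS) => /negP; apply; apply/ctiP.
exists [:: p w, p a & q'].
apply/and3P; split; last first.
- rewrite /= !inE eqxx pa orbT /=; apply/allP => v /(allP qS) Hv; by rewrite !inE Hv orbT.
- exact: mem_head.
apply/and3P; split.
- by case: q' q'n {pq' uq' qS Eq}.
- rewrite cons_uniq uq' andbT inE negb_or; apply/andP; split.
    by apply/eqP => E; rewrite E pa in wS.
  by apply/negP => /(allP qS) H; rewrite H in wS.
- rewrite /cycle rcons_path /= e1wa (sub_path _ pq') /=; last by move=> x y /andP [].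
  by rewrite -Eq.
Qed.
End Proj.
Lemma card_fibA (T1 T2 : finType) (W : {set T1 * T2}) :
  #|W| = \sum_(g : T1) \sum_(h : T2) (if (g, h) \in W then 1 else 0).
Proof.
rewrite -sum1_card big_mkcond /= pair_bigA /=. apply: eq_bigr; by case.
Qed.
Lemma card_fib1 (T1 T2 : finType) (W : {set T1 * T2}) :
  #|W| = \sum_(g : T1) #|[set h | (g, h) \in W]|.
Proof.
rewrite card_fibA; apply: eq_bigr => g _.
rewrite -sum1_card [RHS]big_mkcond /=; apply: eq_bigr => h _; by rewrite inE.
Qed.
Lemma card_fib2 (T1 T2 : finType) (W : {set T1 * T2}) :
  #|W| = \sum_(h : T2) #|[set g | (g, h) \in W]|.
Proof.
rewrite card_fibA exchange_big; apply: eq_bigr => h _.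
rewrite -sum1_card [RHS]big_mkcond /=; apply: eq_bigr => g _; by rewrite inE.
Qed.

Section Box.
Variables (T1 T2 : finType) (e1 : rel T1) (e2 : rel T2).
Hypotheses (sg1 : simple_graph e1) (sg2 : simple_graph e2).
Hypotheses (c1 : connected_graph e1) (c2 : connected_graph e2).

Lemma full_fiber (W : {set T1 * T2}) g0 h0 :
  cycle_convex (box_rel e1 e2) W ->
  (forall g, (g, h0) \in W) -> (forall h, (g0, h) \in W) -> forall u, u \in W.
Proof.
case: sg1 => sym1 irr1; case: sg2 => sym2 irr2.
move=> /convexP HW Hg Hh.
suff Hstep : forall h' h, e2 h' h -> (forall g, (g, h') \in W) -> forall g, (g, h) \in W.
  case=> g h; move: (c2 h0 h) => /connectP [q pq ->].
  elim: q h0 Hg pq => [|h1 q IH] h' Hg' /=; first by [].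
  by case/andP => eh pq; apply: (IH h1 (Hstep h' h1 eh Hg') pq).
move=> h' h eh Hh' g; move: (Hh h) (c1 g0 g) => Hg0 /connectP [q pq ->]; clear Hh.
elim: q g0 Hg0 pq => [|g1 q IH] g' Hg' /=; first by [].
case/andP => eg pq; apply: IH pq.
apply/negPn/negP => Hn; move: (HW _ Hn); apply/negP/negPn.
have ng : g' != g1 by apply/eqP => E; rewrite E irr1 in eg.
have nh : h' != h by apply/eqP => E; rewrite E irr2 in eh.
apply/ctiP; exists [:: (g1, h); (g', h); (g', h'); (g1, h')].
apply/and3P; split; last first.
- rewrite /= !inE !eqxx Hg' !Hh' !orbT //.
- by rewrite mem_head.
apply/and3P; split => //.
  by rewrite /= !inE !xpair_eqE !eqxx (eq_sym g1) (negbTE ng) (eq_sym h) (negbTE nh).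
- rewrite /cycle /= /box_rel /= !eqxx (sym1 g1) eg (sym2 h) eh /= orbT.
  by rewrite /= orbT.
Qed.
End Box.

Theorem mainTheorem12 (T1 T2 : finType) (e1 : rel T1) (e2 : rel T2) :
  simple_graph e1 -> simple_graph e2 ->
  1 < #|T1| -> 1 < #|T2| ->
  connected_graph e1 -> connected_graph e2 ->
  Ccc (box_rel e1 e2) = maxn (#|T2| * Ccc e1) (#|T1| * Ccc e2).
Proof.
move=> sg1 sg2 n1 n2 c1 c2.
apply/eqP; rewrite eqn_leq; apply/andP; split.
- apply: Ccc_le => W WT Wc.
  pose SG := fun h => [set g | (g, h) \in W].
  pose SH := fun g => [set h | (g, h) \in W].
  have SGc : forall h, cycle_convex e1 (SG h).
    move=> h; have -> : SG h = (fun g => (g, h)) @^-1: W by apply/setP => g; rewrite !inE.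
    apply: convex_preim Wc; first by move=> x y [].
    by move=> x y E; rewrite /box_rel /= E eqxx.
  have SHc : forall g, cycle_convex e2 (SH g).
    move=> g; have -> : SH g = (fun h => (g, h)) @^-1: W by apply/setP => h; rewrite !inE.
    apply: convex_preim Wc; first by move=> x y [].
    by move=> x y E; rewrite /box_rel /= E eqxx orbT.
  case: (boolP [forall h, SG h != setT]) => [/forallP HG|].
    rewrite card_fib2 (leq_trans _ (leq_maxl _ _)) //.
    apply: (@leq_trans (\sum_(h : T2) Ccc e1)).
      by apply: leq_sum => h _; apply: Ccc_ge; [exact: HG|exact: SGc].
    by rewrite sum_nat_const.
  rewrite negb_forall => /existsP [h0 /negPn /eqP Hh0].
  case: (boolP [forall g, SH g != setT]) => [/forallP HH|].
    rewrite card_fib1 (leq_trans _ (leq_maxr _ _)) //.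
    apply: (@leq_trans (\sum_(g : T1) Ccc e2)).
      by apply: leq_sum => g _; apply: Ccc_ge; [exact: HH|exact: SHc].
    by rewrite sum_nat_const.
  rewrite negb_forall => /existsP [g0 /negPn /eqP Hg0].
  exfalso; move: WT => /negP; apply; apply/eqP/setP => u; rewrite inE.
  apply: (full_fiber sg1 sg2 c1 c2 (g0 := g0) (h0 := h0) Wc).
  + by move=> g; have : g \in SG h0 by [rewrite Hh0 inE]; rewrite inE.
  + by move=> h; have : h \in SH g0 by [rewrite Hg0 inE]; rewrite inE.
- rewrite geq_max; apply/andP; split.
  + case: (Ccc_attained e1) => [->|[S /andP [ST Sc] <-]]; first by rewrite muln0.
    have -> : #|T2| * #|S| = #|setX S [set: T2]| by rewrite cardsX cardsT mulnC.
    apply: Ccc_ge.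
      apply/negP => /eqP E; move: ST => /negP; apply; apply/eqP/setP => g; rewrite inE.
      have /card_gt0P [h0 _] : 0 < #|T2| by apply: ltnW.
      have : (g, h0) \in setX S [set: T2] by rewrite E inE.
      by rewrite inE => /andP [].
    have -> : setX S [set: T2] = fst @^-1: S by apply/setP => u; rewrite !inE andbT.
    apply: convex_proj Sc.
      move=> u v; rewrite /box_rel => /orP [/andP [-> _] //|/andP [/eqP -> _]].
      by rewrite eqxx orbT.
    move=> w u v wS; rewrite /box_rel => /orP [/andP [_ /eqP E1]|/andP [/eqP E1 _]]; last first.
      by move=> _ uS; rewrite E1 uS in wS.
    move=> /orP [/andP [_ /eqP E2]|/andP [/eqP E2 _]]; last first.
      by move=> _ vS; rewrite -E2 vS in wS.
    move=> _ _ E; move: E E1 E2; case: u => u1 u2; case: v => v1 v2 /= E E1 E2; by rewrite E -E1 E2.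
  + case: (Ccc_attained e2) => [->|[S /andP [ST Sc] <-]]; first by rewrite muln0.
    have -> : #|T1| * #|S| = #|setX [set: T1] S| by rewrite cardsX cardsT.
    apply: Ccc_ge.
      apply/negP => /eqP E; move: ST => /negP; apply; apply/eqP/setP => h; rewrite inE.
      have /card_gt0P [g0 _] : 0 < #|T1| by apply: ltnW.
      have : (g0, h) \in setX [set: T1] S by rewrite E inE.
      by rewrite inE => /andP [].
    have -> : setX [set: T1] S = snd @^-1: S by apply/setP => u; rewrite !inE.
    apply: convex_proj Sc.
      move=> u v; rewrite /box_rel => /orP [/andP [_ /eqP ->]|/andP [_ ->] //].
      by rewrite eqxx orbT.
    move=> w u v wS; rewrite /box_rel => /orP [/andP [_ /eqP E1]|/andP [/eqP E1 _]]; first last.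
      move=> /orP [/andP [_ /eqP E2]|/andP [/eqP E2 _]].
        by move=> _ vS; rewrite -E2 vS in wS.
      move=> _ _ E; move: E E1 E2; case: u => u1 u2; case: v => v1 v2 /= E E1 E2; by rewrite E -E1 E2.
    by move=> _ uS; rewrite E1 uS in wS.
Qed.
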